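(* Let $\mathbf R=\{R_i,t_i\}_{i\ge0}$ be a preperfectoid tower arising from a pair $(R,I_0)$, with $0$-th small tilt $R^{s.\flat}$ and ideal $I_0^{s.\flat}\subset R^{s.\flat}$. Then for every $i\ge0$ the ring homomorphism $R^{s.\flat}/(I_0^{s.\flat})^{p^i}\to R^{s.\flat}/(I_0^{s.\flat})^{p^{i+1}}$, $x\mapsto x^p$, induced by the absolute Frobenius of $R^{s.\flat}$, is injective.
   Context: Fix a prime $p$; rings are commutative with $1$. For a ring $A$, an ideal $I$ and an $A$-module $M$, $M_{I\text{-tor}}$ is the submodule of $x\in M$ such that for every $a\in I$ some $a^nx=0$; $\varphi_{I,A}\colon A_{I\text{-tor}}\to A/IA$ is inclusion followed by projection. $\varphi$ is absolute Frobenius. A tower of rings $\mathbf R=\{R_i,t_i\}_{i\ge0}$ is a sequence of ring maps $R_0\xrightarrow{t_0}R_1\to\cdots$. For a ring $R$ and ideal $I_0$, write $\overline{R_i}=R_i/I_0R_i$, $\overline{t_i}$ the induced maps. A purely inseparable tower arising from $(R,I_0)$: (a) $R_0=R$, $p\in I_0$; (b) each $\overline{t_i}$ injective; (c) $\varphi(\overline{R_{i+1}})\subset\overline{t_i}(\overline{R_i})$; then $F_i\colon\overline{R_{i+1}}\to\overline{R_i}$ is the unique ring map with $\overline{t_i}\circ F_i=\varphi$. A preperfectoid tower is a purely inseparable tower with: (d) each $F_i$ surjective; (f) $I_0$ principal and a principal ideal $I_1\subset R_1$ with $I_1^p=I_0R_1$ and $\ker F_i=I_1\overline{R_{i+1}}$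 for all $i$; (g) for all $i$, $I_0(R_i)_{I_0\text{-tor}}=0$ and a bijection $(F_i)_{\mathrm{tor}}\colon(R_{i+1})_{I_0\text{-tor}}\to(R_i)_{I_0\text{-tor}}$ with $\varphi_{I_0,R_i}\circ(F_i)_{\mathrm{tor}}=F_i\circ\varphi_{I_0,R_{i+1}}$. Small tilt: $R^{s.\flat}:=\varprojlim(\cdots\xrightarrow{F_1}\overline{R_1}\xrightarrow{F_0}\overline{R_0})$ and $I_0^{s.\flat}$ is the kernel of the projection $R^{s.\flat}\to R/I_0$. *)

(* Defs.v *)
From mathcomp Require Import all_boot all_algebra.
Set Implicit Arguments. Unset Strict Implicit. Unset Printing Implicit Defensive.
Import GRing.Theory.
Local Open Scope ring_scope.

Section Tower.
Variables (R : nat -> comPzRingType) (t : forall i, {rmorphism R i -> R i.+1}).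

Fixpoint tau0 (i : nat) : R 0%N -> R i :=
  match i return R 0%N -> R i with
  | 0 => fun x => x
  | j.+1 => fun x => t j (tau0 j x)
  end.

Fixpoint tau1 (i : nat) : R 1%N -> R i.+1 :=
  match i return R 1%N -> R i.+1 with
  | 0 => fun x => x
  | j.+1 => fun x => t j.+1 (tau1 j x)
  end.

(* Membership in the extended ideal I_0 R_i, where I_0 = varpi R_0 (principal). *)
Definition inI0 (varpi : R 0%N) (i : nat) (x : R i) : Prop :=
  exists r : R i, x = tau0 i varpi * r.

Definition inI1 (varpi1 : R 1%N) (i : nat) (x : R i.+1) : Prop :=
  exists r : R i.+1, x = tau1 i varpi1 * r.

(* F_i : R_(i+1)/I_0 -> R_i/I_0, described by its graph on representatives:
   F_i(class of x) = class of y  iff  tbar_i(class y) = (class x)^p,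
   i.e. t_i(y) - x^p lies in I_0 R_(i+1). *)
Definition Frel (p : nat) (varpi : R 0%N) (i : nat) (x : R i.+1) (y : R i) : Prop :=
  inI0 varpi (t i y - x ^+ p).

Definition I0tor (varpi : R 0%N) (i : nat) (x : R i) : Prop :=
  forall a : R i, inI0 varpi a -> exists n : nat, a ^+ n * x = 0.

Definition purely_inseparable_tower (p : nat) (varpi : R 0%N) : Prop :=
  inI0 varpi (p%:R : R 0%N) /\
  (* (b) tbar_i injective *)
  (forall i (x : R i), inI0 varpi (t i x) -> inI0 varpi x) /\
  (* (c) Frobenius of Rbar_(i+1) lands in the image of tbar_i *)
  (forall i (x : R i.+1), exists y : R i, Frel p varpi x y).

Definition preperfectoid_tower (p : nat) (varpi : R 0%N) : Prop :=
  purely_inseparable_tower p varpi /\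
  (* (d) F_i surjective *)
  (forall i (y : R i), exists x : R i.+1, Frel p varpi x y) /\
  (* (f) I_1 = varpi1 R_1 principal, I_1^p = I_0 R_1, ker F_i = I_1 Rbar_(i+1) *)
  (exists varpi1 : R 1%N,
     ((exists r : R 1%N, varpi1 ^+ p = t 0%N varpi * r) /\
      (exists r : R 1%N, t 0%N varpi = varpi1 ^+ p * r)) /\
     (forall i (x : R i.+1),
        Frel p varpi x 0 <->
        exists z : R i.+1, inI1 varpi1 z /\ inI0 varpi (x - z))) /\
  (forall i,
     (forall (a x : R i), inI0 varpi a -> I0tor varpi x -> a * x = 0) /\
     exists G : R i.+1 -> R i,
       (forall x, I0tor varpi x -> I0tor varpi (G x)) /\
       (forall x1 x2, I0tor varpi x1 -> I0tor varpi x2 -> G x1 = G x2 -> x1 = x2) /\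
       (forall y, I0tor varpi y -> exists x, I0tor varpi x /\ G x = y) /\
       (forall x, I0tor varpi x -> Frel p varpi x (G x))).

(* Small tilt R^{s.flat} = lim (Rbar_(i+1) --F_i--> Rbar_i), represented by
   compatible sequences of representatives x_i in R_i: F_i(xbar_(i+1)) = xbar_i.
   Ring operations are componentwise; two sequences represent the same element
   iff x_i - y_i in I_0 R_i for all i. *)
Definition tilt_elt (p : nat) (varpi : R 0%N) (x : forall i, R i) : Prop :=
  forall i, Frel p varpi (x i.+1) (x i).

Definition tilt_eq (varpi : R 0%N) (x y : forall i, R i) : Prop :=
  forall i, inI0 varpi (x i - y i).

(* I_0^{s.flat}: kernel of the projection R^{s.flat} -> R_0/I_0. *)
Definition in_I0flat (p : nat) (varpi : R 0%N) (x : forall i, R i) : Prop :=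
  tilt_elt p varpi x /\ inI0 varpi (x 0%N).

Definition in_I0flat_pow (p : nat) (varpi : R 0%N) (n : nat) (x : forall i, R i) : Prop :=
  exists (m : nat) (c : 'I_m -> forall i, R i) (a : 'I_m -> 'I_n -> forall i, R i),
    (forall k, tilt_elt p varpi (c k)) /\
    (forall k j, in_I0flat p varpi (a k j)) /\
    tilt_eq varpi x (fun i => \sum_(k < m) c k i * \prod_(j < n) a k j i).

End Tower.

(* Main.v *)
Require Import Defs.
From mathcomp Require Import all_boot all_algebra.
From Stdlib Require Import IndefiniteDescription.
From mathcomp Require Import ring zify.
Set Implicit Arguments. Unset Strict Implicit. Unset Printing Implicit Defensive.
Import GRing.Theory.
Local Open Scope ring_scope.

Lemma binom_p (S : comPzRingType) (p : nat) (A B : S) : prime p ->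
  exists M, (A + B) ^+ p = A ^+ p + B ^+ p + p%:R * B * M.
Proof.
move=> pP; have p2 := prime_gt1 pP.
case: p pP p2 => [|[|q]] // pP _.
rewrite exprDn big_ord_recr big_ord_recl /= subnn subn0 !expr0 mul1r mulr1 binn bin0 !mulr1n.
exists (\sum_(i < q.+1) A ^+ (q.+2 - (bump 0 i)) * B ^+ i *+ ('C(q.+2, bump 0 i) %/ q.+2)).
rewrite addrAC; congr (_ + _).
rewrite mulr_sumr; apply: eq_bigr => i _ /=.
have hd : (q.+2 %| 'C(q.+2, bump 0 i))%N.
  by apply: prime_dvd_bin => //; rewrite /bump /= add1n ltnS (ltn_ord i).
rewrite -{1}(divnK hd) mulrnA -mulr_natr.
rewrite /bump /= add1n exprS.
rewrite mul1r mulrCA -(mulrnAr B) -mulr_natl mulrA -(mulr_natl _ q.+2) !mulrA.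
by rewrite mulr1 -!mulrA [in RHS]mulr_natl.
Qed.

Lemma exp_ineq p k : prime p -> (p ^ k.+2 <= p * (p ^ k.+1).-1 * p)%N.
Proof.
move=> pP; have p2 := prime_gt1 pP.
have hP : (p <= p ^ k.+1)%N by rewrite -{1}(expn1 p) leq_pexp2l // prime_gt0.
rewrite (expnS p k.+1); move: hP; set P := (p ^ k.+1)%N => hP.
nia.
Qed.

Section Main.
Variables (p : nat) (R : nat -> comPzRingType) (t : forall i, {rmorphism R i -> R i.+1}) (varpi : R 0%N).
Hypothesis pP : prime p.
Hypothesis Hp : inI0 t varpi (p%:R : R 0%N).
Hypothesis Hb : forall i (x : R i), inI0 t varpi (t i x) -> inI0 t varpi x.
Hypothesis Hc : forall i (x : R i.+1), exists y : R i, Frel t p varpi x y.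
Hypothesis Hd : forall i (y : R i), exists x : R i.+1, Frel t p varpi x y.
Variable varpi1 : R 1%N.
Hypothesis Hf1 : exists r : R 1%N, varpi1 ^+ p = t 0%N varpi * r.
Hypothesis Hf2 : exists r : R 1%N, t 0%N varpi = varpi1 ^+ p * r.
Hypothesis Hf3 : forall i (x : R i.+1), Frel t p varpi x 0 <->
        exists z : R i.+1, inI1 t varpi1 z /\ inI0 t varpi (x - z).
Hypothesis Hg1 : forall i (a x : R i), inI0 t varpi a -> I0tor t varpi x -> a * x = 0.
Hypothesis Hg2 : forall i, exists G : R i.+1 -> R i,
       (forall x, I0tor t varpi x -> I0tor t varpi (G x)) /\
       (forall x1 x2, I0tor t varpi x1 -> I0tor t varpi x2 -> G x1 = G x2 -> x1 = x2) /\
       (forall y, I0tor t varpi y -> exists x, I0tor t varpi x /\ G x = y) /\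
       (forall x, I0tor t varpi x -> Frel t p varpi x (G x)).

Local Notation I0 x := (inI0 t varpi x).
Local Notation pi k := (tau0 t k varpi).
Local Notation eqm a b := (inI0 t varpi (a - b)).
Local Notation Fr x y := (Frel t p varpi x y).
Local Notation T x := (I0tor t varpi x).

Lemma I0_0 k : I0 (0 : R k). Proof. by exists 0; rewrite mulr0. Qed.
Lemma I0D k (a b : R k) : I0 a -> I0 b -> I0 (a + b).
Proof. by move=> [r ->] [s ->]; exists (r + s); rewrite mulrDr. Qed.
Lemma I0N k (a : R k) : I0 a -> I0 (- a).
Proof. by move=> [r ->]; exists (- r); rewrite mulrN. Qed.
Lemma I0B k (a b : R k) : I0 a -> I0 b -> I0 (a - b).
Proof. by move=> ha hb; apply: I0D => //; apply: I0N. Qed.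
Lemma I0Ml k (a b : R k) : I0 b -> I0 (a * b).
Proof. by move=> [r ->]; exists (a * r); rewrite mulrCA. Qed.
Lemma I0Mr k (a b : R k) : I0 a -> I0 (a * b).
Proof. by move=> ha; rewrite mulrC; apply: I0Ml. Qed.
Lemma I0pi k (r : R k) : I0 (pi k * r). Proof. by exists r. Qed.
Lemma I0pi1 k : I0 (pi k). Proof. by exists 1; rewrite mulr1. Qed.
Lemma I0t k (a : R k) : I0 a -> I0 (t k a).
Proof. by move=> [r ->]; exists (t k r); rewrite rmorphM. Qed.
Lemma I0X k (a : R k) n : I0 a -> I0 (a ^+ n.+1).
Proof. by move=> ha; rewrite exprS; apply: I0Mr. Qed.
Lemma I0_sum k (I : Type) (r : seq I) (P : pred I) (F : I -> R k) :
  (forall i, P i -> I0 (F i)) -> I0 (\sum_(i <- r | P i) F i).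
Proof. by move=> h; apply: big_ind => //; [apply: I0_0 | apply: I0D]. Qed.

Lemma eqm_refl k (a : R k) : eqm a a. Proof. by rewrite subrr; apply: I0_0. Qed.
Lemma eqm_sym k (a b : R k) : eqm a b -> eqm b a.
Proof. by move=> h; rewrite -opprB; apply: I0N. Qed.
Lemma eqm_trans k (a b c : R k) : eqm a b -> eqm b c -> eqm a c.
Proof.
move=> h1 h2; have -> : a - c = (a - b) + (b - c) by rewrite addrA subrK.
by apply: I0D.
Qed.
Lemma eqmD k (a b a' b' : R k) : eqm a a' -> eqm b b' -> eqm (a + b) (a' + b').
Proof. by move=> h1 h2; rewrite opprD addrACA; apply: I0D. Qed.
Lemma eqmN k (a a' : R k) : eqm a a' -> eqm (- a) (- a').
Proof. by move=> h; rewrite -opprD; apply: I0N. Qed.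
Lemma eqmB k (a b a' b' : R k) : eqm a a' -> eqm b b' -> eqm (a - b) (a' - b').
Proof. by move=> h1 h2; apply: eqmD => //; apply: eqmN. Qed.
Lemma eqmM k (a b a' b' : R k) : eqm a a' -> eqm b b' -> eqm (a * b) (a' * b').
Proof.
move=> h1 h2.
have -> : a * b - a' * b' = a * (b - b') + (a - a') * b'.
  by rewrite mulrBr mulrBl addrA subrK.
by apply: I0D; [apply: I0Ml | apply: I0Mr].
Qed.
Lemma eqmX k (a a' : R k) n : eqm a a' -> eqm (a ^+ n) (a' ^+ n).
Proof.
move=> h; elim: n => [|n IH]; first by rewrite !expr0; apply: eqm_refl.
by rewrite !exprS; apply: eqmM.
Qed.
Lemma eqm_t k (a b : R k) : eqm a b -> eqm (t k a) (t k b).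
Proof. by move=> h; rewrite -rmorphB; apply: I0t. Qed.
Lemma eqm_I0 k (a b : R k) : eqm a b -> I0 b -> I0 a.
Proof. by move=> h hb; rewrite -(subrK b a); apply: I0D. Qed.
Lemma eqm_I0' k (a b : R k) : eqm a b -> I0 a -> I0 b.
Proof. by move=> h; apply: eqm_I0; apply: eqm_sym. Qed.
Lemma I0_eqm0 k (a : R k) : I0 a -> eqm a 0.
Proof. by rewrite subr0. Qed.
Lemma eqm0_I0 k (a : R k) : eqm a 0 -> I0 a.
Proof. by rewrite subr0. Qed.

Lemma tau0M k (a b : R 0%N) : tau0 t k (a * b) = tau0 t k a * tau0 t k b.
Proof. by elim: k => [|k IH] //=; rewrite IH rmorphM. Qed.
Lemma tau0_nat k n : tau0 t k (n%:R : R 0%N) = n%:R.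
Proof. by elim: k => [|k IH] //=; rewrite IH rmorph_nat. Qed.
Lemma tau1M k (a b : R 1%N) : tau1 t k (a * b) = tau1 t k a * tau1 t k b.
Proof. by elim: k => [|k IH] //=; rewrite IH rmorphM. Qed.
Lemma tau1X k (a : R 1%N) n : tau1 t k (a ^+ n) = tau1 t k a ^+ n.
Proof. by elim: k => [|k IH] //=; rewrite IH rmorphXn. Qed.
Lemma tau1_t0 k (a : R 0%N) : tau1 t k (t 0%N a) = tau0 t k.+1 a.
Proof. by elim: k => [|k IH] //=; rewrite IH. Qed.

Lemma I0p k : I0 (p%:R : R k).
Proof.
case: Hp => r /= hr; exists (tau0 t k r).
by rewrite -tau0M -hr tau0_nat.
Qed.

Lemma frobD k (a b : R k) : eqm ((a + b) ^+ p) (a ^+ p + b ^+ p).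
Proof.
have [M ->] := binom_p a b pP.
by rewrite addrAC subrr add0r; apply: I0Mr; apply: I0Mr; apply: I0p.
Qed.
Lemma frobN k (a : R k) : eqm ((- a) ^+ p) (- (a ^+ p)).
Proof.
have h := frobD a (- a); rewrite subrr expr0n eqn0Ngt prime_gt0 //= in h.
rewrite opprK addrC.
by move: h; rewrite sub0r => /I0N; rewrite opprK.
Qed.
Lemma frobB k (a b : R k) : eqm ((a - b) ^+ p) (a ^+ p - b ^+ p).
Proof.
apply: eqm_trans (frobD _ _) _; apply: eqmD; first exact: eqm_refl.
exact: frobN.
Qed.


Lemma Fr_uniq k (x : R k.+1) (y y' : R k) : Fr x y -> Fr x y' -> eqm y y'.
Proof.
move=> h1 h2; apply: Hb; rewrite rmorphB.
by apply: eqm_trans h1 _; apply: eqm_sym.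
Qed.
Lemma Fr_eqm k (x x' : R k.+1) (y y' : R k) : eqm x x' -> eqm y y' -> Fr x y -> Fr x' y'.
Proof.
move=> hx hy h; rewrite /Frel.
apply: eqm_trans (eqm_t (eqm_sym hy)) _.
by apply: eqm_trans h _; apply: eqmX.
Qed.
Lemma FrD k (x x' : R k.+1) (y y' : R k) : Fr x y -> Fr x' y' -> Fr (x + x') (y + y').
Proof.
move=> h1 h2; rewrite /Frel rmorphD.
apply: eqm_trans (eqmD h1 h2) _; apply: eqm_sym; exact: frobD.
Qed.
Lemma FrN k (x : R k.+1) (y : R k) : Fr x y -> Fr (- x) (- y).
Proof.
move=> h; rewrite /Frel rmorphN.
apply: eqm_trans (eqmN h) _; apply: eqm_sym; exact: frobN.
Qed.
Lemma FrB k (x x' : R k.+1) (y y' : R k) : Fr x y -> Fr x' y' -> Fr (x - x') (y - y').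
Proof. by move=> h1 h2; apply: FrD => //; apply: FrN. Qed.
Lemma FrM k (x x' : R k.+1) (y y' : R k) : Fr x y -> Fr x' y' -> Fr (x * x') (y * y').
Proof.
move=> h1 h2; rewrite /Frel rmorphM exprMn; exact: eqmM.
Qed.
Lemma FrX k (x : R k.+1) (y : R k) n : Fr x y -> Fr (x ^+ n) (y ^+ n).
Proof.
move=> h; rewrite /Frel rmorphXn -exprM mulnC exprM; exact: eqmX.
Qed.
Lemma Fr0 k : Fr (0 : R k.+1) (0 : R k).
Proof. by rewrite /Frel rmorph0 expr0n eqn0Ngt prime_gt0 //= subrr; apply: I0_0. Qed.

Definition tilt (x : forall k, R k) := forall k, Fr (x k.+1) (x k).
Lemma tiltB x y : tilt x -> tilt y -> tilt (fun k => x k - y k).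
Proof. by move=> hx hy k; apply: FrB. Qed.
Lemma tiltM x y : tilt x -> tilt y -> tilt (fun k => x k * y k).
Proof. by move=> hx hy k; apply: FrM. Qed.
Lemma tiltX x n : tilt x -> tilt (fun k => x k ^+ n).
Proof. by move=> hx k; apply: FrX. Qed.

Lemma T_kill k (x : R k) : T x -> pi k * x = 0.
Proof. by move=> h; apply: Hg1 => //; apply: I0pi1. Qed.
Lemma kill_T k (x : R k) : pi k * x = 0 -> T x.
Proof. by move=> h a [r ->]; exists 1%N; rewrite expr1 mulrAC h mul0r. Qed.
Lemma TD k (x y : R k) : T x -> T y -> T (x + y).
Proof.
by move=> hx hy; apply: kill_T; rewrite mulrDr !T_kill // addr0.
Qed.
Lemma TM k (x y : R k) : T x -> T (y * x).
Proof. by move=> hx; apply: kill_T; rewrite mulrCA T_kill // mulr0. Qed.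
Lemma T0 k : T (0 : R k).
Proof. by apply: kill_T; rewrite mulr0. Qed.
Lemma T_I0 k (x : R k) : T x -> I0 x -> x = 0.
Proof.
move=> hT [r hr]; have hr2 : T r.
  move=> a [s ->]; exists 2%N.
  have -> : (pi k * s) ^+ 2 * r = s * s * (pi k * (pi k * r)) by ring.
  by rewrite -hr T_kill // mulr0.
by rewrite hr T_kill.
Qed.

Lemma tilt_tau0 x : tilt x -> forall k, eqm (x k ^+ (p ^ k)) (tau0 t k (x 0%N)).
Proof.
move=> hx; elim=> [|k IH]; first by rewrite expn0 expr1; apply: eqm_refl.
rewrite expnS exprM /=.
apply: eqm_trans (eqmX _ (eqm_sym (hx k))) _.
by rewrite -rmorphXn; apply: eqm_t.
Qed.
Lemma tilt_tau1 x : tilt x -> forall k, eqm (x k.+1 ^+ (p ^ k)) (tau1 t k (x 1%N)).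
Proof.
move=> hx; elim=> [|k IH]; first by rewrite expn0 expr1; apply: eqm_refl.
rewrite expnS exprM /=.
apply: eqm_trans (eqmX _ (eqm_sym (hx k.+1))) _.
by rewrite -rmorphXn; apply: eqm_t.
Qed.

Definition liftF k (y : R k) : R k.+1 := proj1_sig (constructive_indefinite_description _ (Hd y)).
Lemma liftF_spec k (y : R k) : Fr (liftF y) y.
Proof. exact: proj2_sig (constructive_indefinite_description _ (Hd y)). Qed.

Fixpoint wS (j : nat) : R j.+1 :=
  match j as j0 return R j0.+1 with
  | 0 => varpi1
  | j'.+1 => liftF (wS j')
  end.
Definition w (k : nat) : R k :=
  match k as k0 return R k0 with
  | 0 => varpi
  | j.+1 => wS j
  end.

Lemma w_tilt : tilt w.
Proof.
case=> [|k] /=; last exact: liftF_spec.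
rewrite /Frel; apply: I0B.
  by exists 1; rewrite mulr1.
by case: Hf1 => r ->; apply: I0pi.
Qed.

Lemma w_pow k : I0 (w k ^+ (p ^ k)).
Proof.
apply: eqm_I0 (tilt_tau0 w_tilt k) _; exact: I0pi1.
Qed.
Lemma w_pow_ge k n : (p ^ k <= n)%N -> I0 (w k ^+ n).
Proof.
move=> h; rewrite -(subnK h) exprD; apply: I0Ml; exact: w_pow.
Qed.
Lemma w_tau1 k : eqm (tau1 t k varpi1) (w k.+1 ^+ (p ^ k)).
Proof. apply: eqm_sym; exact: (tilt_tau1 w_tilt k). Qed.

Lemma w_exact1 k : exists u, w k ^+ (p ^ k) = pi k * u.
Proof. by have [u hu] := w_pow k; exists u. Qed.

Lemma w_exact2 k : exists s v, pi k = w k ^+ (p ^ k) * s + pi k * pi k * v.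
Proof.
case: k => [|j].
  by exists 1, 0; rewrite expn0 expr1 mulr1 mulr0 addr0.
have [r hr] := Hf2.
have [q hq] := w_tau1 j.
have [c hc] := I0p j.+1.
set W := w j.+1 ^+ (p ^ j) in hq.
have e1 : pi j.+1 = (W + pi j.+1 * q) ^+ p * tau1 t j r.
  by rewrite -{1}tau1_t0 hr tau1M tau1X -hq addrC subrK.
have [M hM] := binom_p W (pi j.+1 * q) pP.
have p2 := prime_gt1 pP.
have hpq : (pi j.+1 * q) ^+ p = pi j.+1 * pi j.+1 * (pi j.+1 ^+ (p - 2) * q ^+ p).
  by rewrite exprMn -{1}(subnK p2) exprD expr2; ring.
exists (tau1 t j r), ((pi j.+1 ^+ (p - 2) * q ^+ p + c * q * M) * tau1 t j r).
rewrite {1}e1 hM hpq hc /W -exprM -expnSr.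
ring.
Qed.

Lemma ann k n (d : R k) : (n <= p ^ k)%N -> I0 (w k ^+ n * d) ->
  exists a tau, T tau /\ eqm d (w k ^+ (p ^ k - n) * a + tau).
Proof.
move=> hn [r hr].
have [u hu] := w_exact1 k.
have [s [v hv]] := w_exact2 k.
have hW : w k ^+ (p ^ k) = w k ^+ (p ^ k - n) * w k ^+ n by rewrite -exprD subnK.
set E := w k ^+ (p ^ k - n) in hW *.
set N := w k ^+ n in hr hW.
set P := w k ^+ (p ^ k) in hu hv hW.
exists (s * r), (s * (u * d - E * r) + (1 - u * s - pi k * v) * d); split.
  apply: TD.
    apply: TM; apply: kill_T.
    have -> : pi k * (u * d - E * r) = (pi k * u) * d - E * (pi k * r) by ring.
    by rewrite -hu -hr hW mulrA subrr.
  rewrite mulrC; apply: TM; apply: kill_T.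
  have -> : pi k * (1 - u * s - pi k * v) = pi k - (pi k * u) * s - pi k * pi k * v by ring.
  by rewrite -hu {1}hv; ring.
have -> : d - (E * (s * r) + (s * (u * d - E * r) + (1 - u * s - pi k * v) * d)) = pi k * (v * d) by ring.
exact: I0pi.
Qed.

Lemma divP z : tilt z -> I0 (z 0%N) -> forall k, exists s, eqm (z k) (w k * s).
Proof.
move=> hz h0; elim=> [|k [s hs]].
  by case: h0 => r hr; exists r; rewrite hr subrr; apply: I0_0.
have [s' hs'] := Hd s.
have hF : Fr (z k.+1 - w k.+1 * s') 0.
  apply: Fr_eqm (FrB (hz k) (FrM (w_tilt k) hs')); first exact: eqm_refl.
  by rewrite subr0.
have [y [[r hy] hxy]] := (proj1 (Hf3 _)) hF.
have P0 : (0 < p ^ k)%N by rewrite expn_gt0 prime_gt0.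
exists (s' + w k.+1 ^+ (p ^ k).-1 * r).
have hy' : eqm y (w k.+1 ^+ (p ^ k) * r) by rewrite hy; apply: eqmM; [exact: w_tau1 | exact: eqm_refl].
have -> : w k.+1 * (s' + w k.+1 ^+ (p ^ k).-1 * r) = w k.+1 * s' + w k.+1 ^+ (p ^ k) * r.
  by rewrite -{2}(prednK P0) exprS; ring.
have -> : z k.+1 - (w k.+1 * s' + w k.+1 ^+ (p ^ k) * r) =
   (z k.+1 - w k.+1 * s' - y) + (y - w k.+1 ^+ (p ^ k) * r) by ring.
exact: I0D.
Qed.

Lemma prod_I0 k N (a : 'I_N -> forall k, R k) : (p ^ k <= N)%N ->
  (forall j, tilt (a j) /\ I0 (a j 0%N)) -> I0 (\prod_(j < N) a j k).
Proof.
move=> hN ha.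
pose s j := proj1_sig (constructive_indefinite_description _
                (divP (proj1 (ha j)) (proj2 (ha j)) k)).
have hs j : eqm (a j k) (w k * s j) := proj2_sig (constructive_indefinite_description _
                (divP (proj1 (ha j)) (proj2 (ha j)) k)).
have h : eqm (\prod_(j < N) a j k) (\prod_(j < N) (w k * s j)).
  apply: (big_ind2 (fun x y => eqm x y)); first exact: eqm_refl.
    by move=> ? ? ? ? ? ?; apply: eqmM.
  by move=> j _; apply: hs.
apply: eqm_I0 h _.
rewrite big_split /= prodr_const card_ord.
by apply: I0Mr; apply: w_pow_ge.
Qed.

Lemma powflat_I0 k x : in_I0flat_pow t p varpi (p ^ k) x -> I0 (x k).
Proof.
case=> m [c [a [hc [ha heq]]]].
apply: eqm_I0 (heq k) _; apply: I0_sum => i _; apply: I0Ml.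
by apply: prod_I0 => // j; apply: ha.
Qed.

Lemma TL j (G : R j.+1 -> R j) :
  (forall x, T x -> T (G x)) ->
  (forall x1 x2, T x1 -> T x2 -> G x1 = G x2 -> x1 = x2) ->
  (forall x, T x -> Fr x (G x)) ->
  forall (tau' y : R j.+1) (y' : R j), T tau' -> Fr y y' -> I0 (y' * G tau') ->
  y * tau' = 0.
Proof.
move=> HG1 HG2 HG4 tau' y y' hT hy hI.
have hu : T (y * tau') by apply: TM.
have e1 : eqm (G (y * tau')) (y' * G tau').
  apply: Fr_uniq (HG4 _ hu) _; apply: FrM => //; exact: HG4.
have hGu : G (y * tau') = 0 by apply: T_I0; [apply: HG1 | apply: eqm_I0 e1 hI].
have hG0 : G 0 = 0.
  apply: T_I0; first by apply: HG1; apply: T0.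
  apply: eqm0_I0; exact: (Fr_uniq (HG4 _ (@T0 j.+1)) (@Fr0 j)).
by apply: HG2 => //; [apply: T0 | rewrite hGu hG0].
Qed.

Lemma ldown z j (E : R j.+1) (C : R j) : tilt z -> Fr E C ->
  eqm (w j.+1 * E) (z j.+1) -> eqm (w j * C) (z j).
Proof.
move=> hz hE h.
have h2 : Fr (z j.+1) (w j * C) by apply: Fr_eqm h (eqm_refl _) (FrM (w_tilt j) hE).
exact: Fr_uniq h2 (hz j).
Qed.

Lemma pow_I0 k (a : R k) : I0 a -> I0 (a ^+ p).
Proof. by move=> h; rewrite -(prednK (prime_gt0 pP)); apply: I0X. Qed.

Definition Inv (z : forall k, R k) k (ce : R k * R k.+1) :=
  eqm (w k.+1 * ce.2) (z k.+1) /\ Fr ce.2 ce.1.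
Arguments Inv : clear implicits.

Lemma init_ex z : tilt z -> I0 (z 0%N) -> exists ce, Inv z 0 ce.
Proof.
move=> hz h0; have [e he] := divP hz h0 1.
have [c hc] := Hc e.
by exists (c, e); split => //; apply: eqm_sym.
Qed.



Lemma step_ex z : tilt z -> I0 (z 0%N) -> forall k ce, Inv z k ce ->
  exists ce', Inv z k.+1 ce' /\ Fr ce'.1 ce.1.
Proof.
move=> hz h0 k [c e] [/= h1 h2].
have [e'' he''] := divP hz h0 k.+2.
have [f hf] := Hc e''.
have hfS : eqm (w k.+1 * f) (z k.+1) := ldown hz hf (eqm_sym he'').
have hd : I0 (w k.+1 ^+ 1 * (e - f)).
  by rewrite expr1 mulrBr; apply: eqm_trans h1 (eqm_sym hfS).
have hN : (0 < p ^ k.+1)%N by rewrite expn_gt0 prime_gt0.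
have [a [tau [hT hdd]]] := ann hN hd.
have htau : I0 (w k.+1 * tau).
  have h3 : I0 (w k.+1 * (w k.+1 ^+ (p ^ k.+1 - 1) * a + tau)).
    by apply: eqm_I0' (eqmM (eqm_refl _) hdd) _; rewrite -(expr1 (w k.+1)).
  have -> : w k.+1 * tau = w k.+1 * (w k.+1 ^+ (p ^ k.+1 - 1) * a + tau) - w k.+1 ^+ (p ^ k.+1) * a.
    by rewrite -{2}(prednK hN) exprS subn1; ring.
  by apply: I0B => //; apply: I0Mr; apply: w_pow.
have [G [HG1 [HG2 [HG3 HG4]]]] := Hg2 k.+1.
have [tau' [hT' hG']] := HG3 tau hT.
have hw' : w k.+2 * tau' = 0.
  by apply: (TL HG1 HG2 HG4 hT' (w_tilt k.+1)); rewrite hG'.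
have [c' hc'] := Hc (e'' + tau').
exists (c', e'' + tau'); split; first split => //=.
  by rewrite mulrDr hw' addr0; apply: eqm_sym.
rewrite /= /Frel; apply: Hb; rewrite rmorphB rmorphXn.
have s1 : eqm (t k.+1 (t k c)) (t k.+1 e ^+ p) by rewrite -rmorphXn; apply: eqm_t.
have s2 : eqm (t k.+1 c' ^+ p) ((e'' + tau') ^+ p ^+ p) by apply: eqmX.
apply: eqm_trans s1 _; apply: eqm_trans _ (eqm_sym s2).
set X := (w k.+2 ^+ p) ^+ (p ^ k.+1 - 1) * t k.+1 a.
have s3 : eqm (t k.+1 e) (e'' ^+ p + (X + tau' ^+ p)).
  have -> : e = f + (e - f) by rewrite addrC subrK.
  rewrite rmorphD; apply: eqmD => //.
  apply: eqm_trans (eqm_t hdd) _; rewrite rmorphD rmorphM rmorphXn.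
  apply: eqmD; first by apply: eqmM; [apply: eqmX; apply: w_tilt | apply: eqm_refl].
  by rewrite -hG'; apply: HG4.
apply: eqm_trans (eqmX _ s3) _.
apply: eqm_trans (frobD _ _) _.
apply: eqm_trans (eqmD (eqm_refl _) (frobD _ _)) _.
apply: eqm_sym; apply: eqm_trans (eqmX _ (frobD _ _)) _.
apply: eqm_trans (frobD _ _) _.
have HX : I0 (X ^+ p).
  rewrite /X exprMn -!exprM; apply: I0Mr; apply: w_pow_ge.
  rewrite subn1; exact: exp_ineq k pP.
apply: eqm_sym; rewrite addrCA.
apply: eqm_trans (eqmD (I0_eqm0 HX) (eqm_refl _)) _; rewrite add0r; exact: eqm_refl.
Qed.

Section Div1.
Variable z : forall k, R k.
Hypothesis hz : tilt z.
Hypothesis h0 : I0 (z 0%N).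

Fixpoint st (k : nat) : {ce : R k * R k.+1 | Inv z k ce} :=
  match k as k0 return {ce : R k0 * R k0.+1 | Inv z k0 ce} with
  | 0 => exist _ _ (proj2_sig (constructive_indefinite_description _ (init_ex hz h0)))
  | k'.+1 => let s := st k' in
     exist _ _ (proj1 (proj2_sig (constructive_indefinite_description _
                   (step_ex hz h0 (proj2_sig s)))))
  end.

Lemma st_rel k : Fr (proj1_sig (st k.+1)).1 (proj1_sig (st k)).1.
Proof.
exact: (proj2 (proj2_sig (constructive_indefinite_description _
                   (step_ex hz h0 (proj2_sig (st k)))))).
Qed.

Lemma div1 : exists c, tilt c /\ forall k, eqm (z k) (w k * c k).
Proof.
exists (fun k => (proj1_sig (st k)).1); split; first by move=> k; apply: st_rel.
move=> k; have [h1 h2] := proj2_sig (st k).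
apply: eqm_sym; exact: ldown hz h2 h1.
Qed.
End Div1.

Section TTilt.
Variable n : nat.
Variable tau0 : R 0%N.
Hypothesis hT0 : T tau0.

Definition InvT k (x : R k) := T x /\ w k ^+ n.+1 * x = 0.
Arguments InvT : clear implicits.

Lemma invT0 : InvT 0 tau0.
Proof.
split => //; rewrite exprSr -mulrA.
have -> : w 0%N * tau0 = 0 by exact: (T_kill hT0).
by rewrite mulr0.
Qed.

Lemma stepT k x : InvT k x -> exists x', InvT k.+1 x' /\ Fr x' x.
Proof.
move=> [hT hw].
have [G [HG1 [HG2 [HG3 HG4]]]] := Hg2 k.
have [x' [hT' hG]] := HG3 x hT.
exists x'; split; last by rewrite -hG; apply: HG4.
split => //; apply: (TL HG1 HG2 HG4 hT' (FrX n.+1 (w_tilt k))).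
by rewrite hG hw; apply: I0_0.
Qed.

Fixpoint tt (k : nat) : {x : R k | InvT k x} :=
  match k as k0 return {x : R k0 | InvT k0 x} with
  | 0 => exist _ tau0 invT0
  | k'.+1 => let s := tt k' in
     exist _ _ (proj1 (proj2_sig (constructive_indefinite_description _
                   (stepT (proj2_sig s)))))
  end.

Lemma ttilt : exists tau : forall k, R k,
  tilt tau /\ tau 0%N = tau0 /\ forall k, w k ^+ n.+1 * tau k = 0.
Proof.
exists (fun k => proj1_sig (tt k)); split; last split => //.
  move=> k; exact: (proj2 (proj2_sig (constructive_indefinite_description _
                   (stepT (proj2_sig (tt k)))))).
by move=> k; case: (proj2_sig (tt k)).
Qed.
End TTilt.

Lemma down_I0 z : tilt z -> forall j, I0 (z j) -> I0 (z 0%N).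
Proof.
move=> hz; elim=> [|j IH] // h; apply: IH; apply: Hb.
by apply: eqm_I0' (eqm_sym (hz j)) _; apply: pow_I0.
Qed.

Lemma down_P (P : nat -> Prop) : (forall k, P k.+1 -> P k) -> forall j, P j -> P 0%N.
Proof. by move=> h; elim=> [|j IH] // hj; apply: IH; apply: h. Qed.

Lemma iter z i : tilt z -> I0 (z i) -> forall n, (n < p ^ i)%N ->
  exists c, tilt c /\ forall k, eqm (z k) (w k ^+ n.+1 * c k).
Proof.
move=> hz hzi; elim=> [|n IH] hn.
  have [c [hc hzc]] := div1 hz (down_I0 hz hzi).
  by exists c; split => // k; rewrite expr1.
have [c [hc hzc]] := IH (ltnW hn).
have hci : I0 (w i ^+ n.+1 * c i) by apply: eqm_I0' (hzc i) hzi.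
have [a [tau [hT hd]]] := ann (ltnW hn) hci.
set e := (p ^ i - n.+1)%N in hd.
have he : (0 < e)%N by rewrite subn_gt0.
pose P k := exists a tau, T tau /\ eqm (c k) (w k ^+ e * a + tau).
have hP : forall k, P k.+1 -> P k.
  move=> k [a1 [t1 [hT1 hd1]]].
  have [a' ha'] := Hc a1.
  have [G [HG1 [_ [_ HG4]]]] := Hg2 k.
  exists a', (G t1); split; first exact: HG1.
  have h2 : Fr (c k.+1) (w k ^+ e * a' + G t1).
    apply: Fr_eqm (eqm_sym hd1) (eqm_refl _) _.
    apply: FrD; last exact: HG4.
    by apply: FrM => //; apply: FrX; apply: w_tilt.
  exact: Fr_uniq (hc k) h2.
have [a0 [t0 [hT0 hd0]]] := down_P hP (ex_intro _ a (ex_intro _ tau (conj hT hd))).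
have hct : eqm (c 0%N) t0.
  apply: eqm_trans hd0 _.
  have -> : w 0%N ^+ e * a0 + t0 - t0 = w 0%N ^+ e * a0 by rewrite addrK.
  by apply: I0Mr; apply: w_pow_ge; rewrite expn0.
have [tau0 [htt [ht0 htw]]] := ttilt n hT0.
have hc' : tilt (fun k => c k - tau0 k) by apply: tiltB.
have h0' : I0 (c 0%N - tau0 0%N) by rewrite ht0.
have [c'' [hc'' hcc]] := div1 hc' h0'.
exists c''; split => // k.
apply: eqm_trans (hzc k) _.
have -> : w k ^+ n.+1 * c k = w k ^+ n.+1 * (c k - tau0 k).
  by rewrite mulrBr htw subr0.
rewrite [w k ^+ n.+2]exprSr -mulrA; apply: eqmM; first exact: eqm_refl.
exact: hcc.
Qed.

Lemma main_sec i (x y : forall k, R k) :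
  tilt_elt t p varpi x -> tilt_elt t p varpi y ->
  in_I0flat_pow t p varpi (p ^ i.+1) (fun k => x k ^+ p - y k ^+ p) ->
  in_I0flat_pow t p varpi (p ^ i) (fun k => x k - y k).
Proof.
move=> hx hy hfl.
have h1 := powflat_I0 hfl; rewrite /= in h1.
have hz : tilt (fun k => x k - y k) by apply: tiltB.
have hzi : I0 (x i - y i).
  apply: Hb; rewrite rmorphB; apply: eqm_I0' _ h1; apply: eqm_sym.
  by apply: eqmB; [apply: hx | apply: hy].
have hP0 : (0 < p ^ i)%N by rewrite expn_gt0 prime_gt0.
have hlt : ((p ^ i).-1 < p ^ i)%N by rewrite prednK.
have [c [hc hzc]] := iter hz hzi hlt.
exists 1%N, (fun _ => c), (fun _ _ => w); split; first by [].
split; first by move=> _ _; split; [exact: w_tilt | exists 1; rewrite mulr1].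
move=> k; rewrite big_ord1 prodr_const card_ord mulrC.
by have := hzc k; rewrite prednK.
Qed.
End Main.

Theorem lemma2p10 (p : nat) (R : nat -> comPzRingType)
    (t : forall i, {rmorphism R i -> R i.+1}) (varpi : R 0%N) :
  prime p ->
  preperfectoid_tower t p varpi ->
  forall (i : nat) (x y : forall k, R k),
    tilt_elt t p varpi x -> tilt_elt t p varpi y ->
    in_I0flat_pow t p varpi (p ^ i.+1) (fun k => x k ^+ p - y k ^+ p) ->
    in_I0flat_pow t p varpi (p ^ i) (fun k => x k - y k).
Proof.
move=> pP [[Hp [Hb Hc]] [Hd [[varpi1 [[Hf1 Hf2] Hf3]] Hg]]] i x y hx hy hfl.
exact: (main_sec pP Hp Hb Hc Hd Hf1 Hf2 Hf3 (fun i => proj1 (Hg i)) (fun i => proj2 (Hg i)) hx hy hfl).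
Qed.
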